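(* Let $n\ge 1$ and $m\ge 0$ be integers and let $r$ be an integer with $0\le r\le m$. Then $$\mathcal Y_n\big(2^{\{r\}},1^{\{m-r\}}\big)=\frac{1}{(r+1)n}\binom{m}{r}\left(\binom{n-1}{m}+(-1)^r\binom{n-1}{m+r+1}\right).$$ That is, the sum of $\mathfrak Z_n(\sigma)$ over all distinct permutations $\sigma$ of the multiset consisting of $r$ copies of $2$ and $m-r$ copies of $1$ equals the right-hand side.
   Context: Let $\zeta_n=e^{2\pi\sqrt{-1}/n}$. For positive integers $s_1,\dots,s_m$, define $\mathfrak Z_n(s_1,\dots,s_m):=\sum_{1\le i_1<\cdots<i_m\le n-1}\prod_{k=1}^{m}(1-\zeta_n^{i_k})^{-s_k}$ (equal to $1$ if $m=0$ and to $0$ if $m>n-1$). Define $\mathcal Y_n(s_1,\dots,s_m):=\sum_{\sigma}\mathfrak Z_n(\sigma)$, where $\sigma$ runs over all distinct rearrangements of $(s_1,\dots,s_m)$; $\mathcal Y_n$ of the empty sequence is $1$. Notation: $a^{\{k\}}$ denotes the block $a,\dots,a$ of length $k$. Binomial coefficients $\binom{a}{b}$ are $0$ when $b<0$ or $b>a\ge0$. *)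

(* Defs.v *)
From HB Require Import structures.
From mathcomp Require Import all_boot all_order all_algebra.
From mathcomp Require Import all_classical all_reals.
From mathcomp Require Import trigo.
From mathcomp.real_closed Require Import complex.
Set Implicit Arguments. Unset Strict Implicit. Unset Printing Implicit Defensive.
Import Order.TTheory GRing.Theory Num.Theory.
Local Open Scope ring_scope.
Local Open Scope complex_scope.

Definition zeta (R : realType) (n : nat) : R[i] :=
  (cos (2 * pi / n%:R)) +i* (sin (2 * pi / n%:R)).

(* Zaux n lo s = sum over lo <= i_1 < ... < i_m <= n-1 of
   prod_k (1 - zeta_n^{i_k})^{-s_k}, where s = [:: s_1; ...; s_m]. *)
Fixpoint Zaux (R : realType) (n lo : nat) (s : seq nat) : R[i] :=
  match s with
  | [::] => 1
  | a :: s' => \sum_(lo <= i < n) (1 - zeta R n ^+ i) ^- a * Zaux R n i.+1 s'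
  end.

Definition frakZ (R : realType) (n : nat) (s : seq nat) : R[i] := Zaux R n 1 s.

(* Y_n(s) : sum of frakZ_n over all distinct rearrangements of s
   ([permutations s] is duplicate-free; undup is harmless). *)
Definition calY (R : realType) (n : nat) (s : seq nat) : R[i] :=
  \sum_(t <- undup (permutations s)) frakZ R n t.

(* Main.v *)
Require Import Defs.
From HB Require Import structures.
From mathcomp Require Import all_boot all_order all_algebra.
From mathcomp Require Import all_classical all_reals.
From mathcomp Require Import trigo.
From mathcomp.real_closed Require Import complex.
From mathcomp Require Import ring lra zify.
Import Order.TTheory GRing.Theory Num.Theory.
Local Open Scope ring_scope.

Unset Implicit Arguments.
Local Open Scope complex_scope.

Section Trig.
Variable R : realType.

Lemma cis_mul (a b : R) : (cos a +i* sin a) * (cos b +i* sin b) = cos (a + b) +i* sin (a + b).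
Proof. by rewrite cosD sinD; apply/eqP; rewrite eq_complex /=; apply/andP; split; apply/eqP; ring. Qed.

Lemma cis_exp (a : R) k : (cos a +i* sin a) ^+ k = cos (a *+ k) +i* sin (a *+ k).
Proof.
elim: k => [|k IH]; first by rewrite expr0 mulr0n cos0 sin0.
by rewrite exprS IH cis_mul mulrS.
Qed.

Lemma cos_lt1 (x : R) : 0 < x < pi *+ 2 -> cos x < 1.
Proof.
case/andP=> x0 x2.
have key : forall y : R, 0 < y <= pi -> cos y < 1.
  move=> y /andP[y0 ypi]; rewrite -cos0 ltr_cos ?in_itv /= ?lexx ?pi_ge0 ?(ltW y0) //.
case: (lerP x pi) => xpi; first by apply: key; rewrite x0.
have -> : cos x = cos (pi *+ 2 - x) by rewrite cosB cos2pi sin2pi; ring.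
by apply: key; rewrite subr_gt0 x2 /= lerBlDr -lerBlDl mulr2n addrK ltW.
Qed.

End Trig.

Lemma zeta_prim (R : realType) n : (0 < n)%N -> n.-primitive_root (zeta R n).
Proof.
move=> n0; apply/andP; split=> //; apply/forallP => i; rewrite unity_rootE.
rewrite /zeta cis_exp.
have nR : (n%:R : R) != 0 by rewrite pnatr_eq0 -lt0n.
have E : forall k, (2 * pi / n%:R) *+ k = (pi *+ 2) * (k%:R / n%:R) :> R.
  by move=> k; rewrite -mulr_natr mulr2n; field.
case: (i.+1 =P n) => [e | ne].
  by rewrite e E divff // mulr1 cos2pi sin2pi eqxx.
rewrite eqbF_neg eq_complex /= negb_and; apply/orP; left; apply/negP => /eqP c1.
have p2 : (0 : R) < pi *+ 2 by rewrite pmulrn_lgt0 // pi_gt0.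
suff : cos ((2 * pi / n%:R) *+ i.+1) < 1 :> R by rewrite c1 ltxx.
apply: cos_lt1; rewrite E; apply/andP; split.
  by rewrite mulr_gt0 // divr_gt0 ?ltr0n.
rewrite gtr_pMr // ltr_pdivrMr ?ltr0n // mul1r ltr_nat.
by rewrite ltn_neqAle (ltn_ord i) andbT; apply/eqP.
Qed.

Local Close Scope complex_scope.


Section Prod.
Variable R : realType.
Variable n : nat.
Hypothesis n0 : (0 < n)%N.
Local Notation C := (R[i]).
Local Notation z := (zeta R n).

Lemma prod_sub (c : C) : \prod_(1 <= i < n) (c - z ^+ i) = \sum_(j < n) c ^+ j.
Proof.
have F := factor_Xn_sub_1 (@zeta_prim R n n0).
rewrite big_ltn // expr0 in F.
have G : ('X - 1%:P) * \prod_(1 <= i < n) ('X - (z ^+ i)%:P) =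
    ('X - 1%:P) * \sum_(j < n) 'X ^+ j :> {poly C}.
  by rewrite F -subrX1.
have nz : ('X - 1%:P : {poly C}) != 0 by rewrite polyXsubC_eq0.
have H := mulfI nz G.
have := congr1 (fun p => p.[c]) H; rewrite /= horner_prod horner_sum.
under eq_bigr do rewrite hornerXsubC.
move=> ->; apply: eq_bigr => i _; by rewrite hornerXn.
Qed.

End Prod.
Section Prod2.
Variable R : realType.
Variable n : nat.
Hypothesis n0 : (0 < n)%N.
Local Notation C := (R[i]).
Local Notation z := (zeta R n).
Definition xx (i : nat) : C := (1 - z ^+ i)^-1.
Definition SS (c : C) : C := \sum_(j < n) c ^+ j.

Lemma prod_one : \prod_(1 <= i < n) (1 - z ^+ i) = n%:R.
Proof. by rewrite (@prod_sub R n n0) (eq_bigr (fun _ => 1)) ?sumr_const ?card_ord // => i _; rewrite expr1n. Qed.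

Lemma nR_neq0 : (n%:R : C) != 0.
Proof. by rewrite pnatr_eq0 -lt0n. Qed.

Lemma prodA (A : C) : (\prod_(1 <= i < n) (1 + A * xx i)) * n%:R = SS (1 + A).
Proof.
have nz : forall i, (1 <= i < n)%N -> 1 - z ^+ i != 0.
  move=> i hi; apply/negP => /eqP h; move: nR_neq0; rewrite -prod_one.
  by rewrite (bigD1_seq i) ?mem_index_iota ?iota_uniq //= h mul0r eqxx.
rewrite /SS -prod_one -(@prod_sub R n n0) -big_split /=.
rewrite big_seq_cond [RHS]big_seq_cond; apply: eq_bigr => i.
rewrite andbT mem_index_iota => hi.
rewrite /xx mulrDl mul1r -mulrA mulVf ?nz // mulr1; ring.
Qed.
End Prod2.

Set Implicit Arguments. Unset Strict Implicit.

Section Ev.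
Variable F : numFieldType.
Variable K : nat.

Definition ev (f : nat -> nat -> F) (t u : F) :=
  \sum_(r < K) \sum_(k < K) f r k * t ^+ k * u ^+ r.

Lemma ev_lin a f g t u : ev (fun r k => a * f r k + g r k) t u = a * ev f t u + ev g t u.
Proof.
rewrite /ev mulr_sumr -big_split; apply: eq_bigr => r _.
rewrite mulr_sumr -big_split; apply: eq_bigr => k _; by rewrite !mulrDl !mulrA.
Qed.

Lemma ev_opp f t u : ev (fun r k => - f r k) t u = - ev f t u.
Proof.
rewrite /ev -sumrN; apply: eq_bigr => r _; rewrite -sumrN; apply: eq_bigr => k _; ring.
Qed.

Lemma ev_ext f g t u : (forall r k, f r k = g r k) -> ev f t u = ev g t u.
Proof. by move=> e; rewrite /ev; apply: eq_bigr => r _; apply: eq_bigr => k _; rewrite e. Qed.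

Lemma ev_shiftk f t u : (0 < K)%N -> (forall r, f r K.-1 = 0) ->
  ev (fun r k => if k is k'.+1 then f r k' else 0) t u = t * ev f t u.
Proof.
move=> K0 h; have [K' eK] : exists K', K = K'.+1 by exists K.-1; rewrite prednK.
rewrite eK /= in h; rewrite /ev eK mulr_sumr; apply: eq_bigr => r _.
rewrite big_ord_recl /= mul0r mul0r add0r big_ord_recr /= h mul0r mul0r addr0 mulr_sumr.
apply: eq_bigr => k _; rewrite /bump /= exprS; ring.
Qed.

Lemma ev_shiftr f t u : (0 < K)%N -> (forall k, f K.-1 k = 0) ->
  ev (fun r k => if r is r'.+1 then f r' k else 0) t u = u * ev f t u.
Proof.
move=> K0 h; have [K' eK] : exists K', K = K'.+1 by exists K.-1; rewrite prednK.
rewrite eK /= in h; rewrite /ev eK mulr_sumr.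
rewrite big_ord_recl /= big1 ?add0r; last by move=> k _; rewrite !mul0r.
have z : u * (\sum_(k < K'.+1) f K' k * t ^+ k * u ^+ K') = 0.
  by rewrite big1 ?mulr0 // => k _; rewrite h !mul0r.
rewrite [RHS]big_ord_recr /= z addr0.
apply: eq_bigr => r _; rewrite mulr_sumr; apply: eq_bigr => k _.
rewrite /bump /= exprS; ring.
Qed.

Lemma ev_delta a b t u : (a < K)%N -> (b < K)%N ->
  ev (fun r k => ((r == a) && (k == b))%:R) t u = t ^+ b * u ^+ a.
Proof.
move=> ha hb; rewrite /ev (bigD1 (Ordinal ha)) //= [X in _ + X]big1 ?addr0; last first.
  move=> r hr; apply: big1 => k _.
  have -> : (r == a :> nat) = false.
    by apply/negbTE; move: hr; apply: contra => /eqP e; apply/eqP/val_inj.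
  by rewrite !mul0r.
rewrite (bigD1 (Ordinal hb)) //= [X in _ + X]big1 ?addr0 ?eqxx ?mul1r //.
move=> k hk /=.
have -> : (k == b :> nat) = false.
  by apply/negbTE; move: hk; apply: contra => /eqP e; apply/eqP/val_inj.
by rewrite !mul0r.
Qed.

Lemma poly_unique (g : nat -> F) : (forall x, \sum_(i < K) g i * x ^+ i = 0) ->
  forall i, (i < K)%N -> g i = 0.
Proof.
move=> h i hi.
pose p := \poly_(j < K) g j.
have pE : forall x, p.[x] = 0.
  by move=> x; rewrite horner_poly; apply: h.
suff p0 : p = 0.
  by have := congr1 (fun q : {poly F} => q`_i) p0; rewrite coef_poly hi coef0.
apply/eqP; apply: contraT => pn0.
have := @max_poly_roots _ p [seq j%:R | j <- iota 0 K] pn0.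
rewrite size_map size_iota.
have -> : all (root p) [seq j%:R | j <- iota 0 K].
  by apply/allP => x _; rewrite /root pE.
rewrite map_inj_uniq ?iota_uniq; last by move=> a b /eqP; rewrite eqr_nat => /eqP.
move=> /(_ isT isT) => lt; have := size_poly K g; rewrite -/p => le.
by have := leq_trans lt le; rewrite ltnn.
Qed.

Lemma ev_unique f : (forall t u, ev f t u = 0) ->
  forall r k, (r < K)%N -> (k < K)%N -> f r k = 0.
Proof.
move=> h r k hr hk.
have h1 : forall t, \sum_(k0 < K) f r k0 * t ^+ k0 = 0.
  move=> t; apply: (@poly_unique (fun r => \sum_(k0 < K) f r k0 * t ^+ k0)) => // u.
  rewrite -[RHS](h t u) /ev; apply: eq_bigr => r0 _; rewrite mulr_suml.
  by apply: eq_bigr => k' _.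
exact: (@poly_unique (fun k => f r k)).
Qed.

End Ev.

Unset Implicit Arguments.

Section Luc.
Variable F : numFieldType.

Definition wp (m r : nat) : nat := 'C(m.+1, r.+1) + 'C(m, r).

Definition luc (j r k : nat) : F :=
  if r is r'.+1 then
    (if (k + r.*2 == j)%N then (-1) ^+ r' * (wp (k + r')%N r')%:R else 0)
  else (if (j == 0%N) && (k == 0%N) then -1 else 0).

Lemma wp_rec m r : wp m.+1 r.+1 = wp m r.+1 + wp m r.
Proof. rewrite /wp !binS; lia. Qed.

Lemma luc_rec j r k : luc j.+2 r k =
  (if k is k'.+1 then luc j.+1 r k' else 0) - (if r is r'.+1 then luc j r' k else 0)
  + ((r == 1) && (k == j))%:R.
Proof.
case: r => [|r].
  by case: k => [|k] /=; rewrite ?subr0 ?add0r ?addr0 //.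
case: r => [|r].
  rewrite /luc /= !mul1r.
  case: k => [|k].
    case: j => [|j]; first by rewrite /= /wp sub0r opprK (natrD F 1 1).
    by rewrite /= subr0 addr0.
  have E : forall a b, (a == b) = (a == b :> nat) by [].
  case: (eqVneq j k.+1) => [->|ne].
    rewrite (_ : (k.+1 + 1.*2 == k.+3)%N = true); last by apply/eqP; lia.
    rewrite (_ : (k + 1.*2 == k.+2)%N = true); last by apply/eqP; lia.
    rewrite /= expr0 mul1r subr0 /wp !addn0 !bin1 !bin0 -natrD; congr (_%:R); lia.
  rewrite (_ : (k.+1 + 1.*2 == j.+2)%N = false); last by apply/negbTE; apply/eqP; move/eqP: ne; lia.
  rewrite (_ : (k + 1.*2 == j.+1)%N = false); last by apply/negbTE; apply/eqP; move/eqP: ne; lia.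
  by rewrite /= andbF subr0 addr0.
rewrite /luc -/luc.
have r1 : (r.+2 == 1)%N = false by [].
rewrite r1 andFb addr0.
case: k => [|k].
  rewrite /= sub0r.
  repeat (case: ifP => [/eqP ?|/negbT/eqP ?]); try (exfalso; lia).
    by rewrite /wp !add0n !binn exprS; ring.
  by rewrite oppr0.
rewrite /luc.
repeat (case: ifP => [/eqP ?|/negbT/eqP ?]); try (exfalso; lia).
  rewrite (_ : (k.+1 + r.+1 = (k + r.+1).+1)%N); last by lia.
  rewrite wp_rec natrD (_ : (k.+1 + r = k + r.+1)%N); last by lia.
  rewrite exprS; ring.
by rewrite subr0.
Qed.

Lemma ev_add3 K (f g h : nat -> nat -> F) t u :
  ev K (fun r k => f r k - g r k + h r k) t u = ev K f t u - ev K g t u + ev K h t u.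
Proof.
have := ev_lin K 1 (fun r k => f r k - g r k) h t u; rewrite mul1r.
under ev_ext do rewrite mul1r. move=> ->.
have := ev_lin K 1 f (fun r k => - g r k) t u; rewrite mul1r ev_opp.
by under ev_ext do rewrite mul1r; move=> ->.
Qed.

Lemma ev0 K t u : ev K (fun _ _ => (0 : F)) t u = 0.
Proof. by rewrite /ev big1 // => r _; rewrite big1 // => k _; rewrite !mul0r. Qed.

Variables (A B : F).
Let t := A + B.
Let u := A * B.
Definition DD j := t ^+ j - A ^+ j - B ^+ j.

Lemma DD_rec j : DD j.+2 = t * DD j.+1 - u * DD j + t ^+ j * u ^+ 1.
Proof. rewrite /DD /t /u !exprS; ring. Qed.

Lemma luc_ev K j : (j.+1 < K)%N -> DD j = ev K (luc j) t u.
Proof.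
move=> hj; suff H : forall j, (j.+2 < K)%N -> DD j = ev K (luc j) t u /\ DD j.+1 = ev K (luc j.+1) t u.
  case: j hj => [|j] hj.
    have K1 : (1 < K)%N by lia.
    rewrite /DD /luc !expr0.
    have := ev_opp K (fun r k => ((r == 0%N) && (k == 0%N))%:R) t u.
    rewrite ev_delta ?expr0 ?mulr1 //; [|lia|lia].
    move=> e; rewrite (@ev_ext _ K _ (fun r k => - ((r == 0%N) && (k == 0%N))%:R)).
      by rewrite e; ring.
    by move=> [|r] [|k] //=; rewrite ?oppr0.
  by case: (H j); [lia|].
clear j hj; elim=> [|j IH] hj.
  split.
    rewrite /DD /luc !expr0.
    rewrite (@ev_ext _ K _ (fun r k => - ((r == 0%N) && (k == 0%N))%:R)).
      by rewrite ev_opp ev_delta ?expr0 ?mulr1 //; [ring|lia|lia].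
    by move=> [|r] [|k] //=; rewrite ?oppr0.
  rewrite /DD !expr1 /t (@ev_ext _ K _ (fun _ _ => 0)).
    by rewrite ev0; ring.
  move=> [|r] k //=; case: ifP => // /eqP; lia.
have [IH1 IH2] := IH (ltnW hj).
split=> //.
rewrite DD_rec IH1 IH2.
rewrite [RHS](@ev_ext _ K _ (fun r k => (if k is k'.+1 then luc j.+1 r k' else 0)
   - (if r is r'.+1 then luc j r' k else 0) + ((r == 1%N) && (k == j))%:R)); last first.
  by move=> r k; rewrite luc_rec.
rewrite ev_add3 ev_shiftk; last 2 first.
- lia.
- move=> [|r] /=; first by [].
  case: ifP => // /eqP; lia.
rewrite ev_shiftr; last 2 first.
- lia.
- move=> k; rewrite /luc; case E : K.-1 => [|r]; first lia.
  case: ifP => // /eqP; lia.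
by rewrite ev_delta //; lia.
Qed.
End Luc.

Set Implicit Arguments. Unset Strict Implicit.

Section Parts.
Variable F : numFieldType.

Lemma sum_widen (G : nat -> F) a b : (a <= b)%N -> (forall i, (a <= i)%N -> G i = 0) ->
  \sum_(i < a) G i = \sum_(i < b) G i.
Proof.
move=> ab h; rewrite (big_ord_widen b G) // big_mkcond; apply: eq_bigr => i _.
by case: ifP => // /negbT; rewrite -leqNgt => /h ->.
Qed.

Lemma binK (x : F) N M : (N < M)%N -> (1 + x) ^+ N = \sum_(k < M) ('C(N, k))%:R * x ^+ k.
Proof.
move=> h; rewrite addrC exprD1n (eq_bigr (fun k : 'I_N.+1 => 'C(N, k)%:R * x ^+ k)); last first.
  by move=> i _; rewrite mulr_natl.
rewrite (@sum_widen (fun k => 'C(N, k)%:R * x ^+ k) N.+1 M) //.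
by move=> i hi; rewrite bin_small // mul0r.
Qed.

Lemma sum_ind M (v : nat) (X : nat -> F) :
  \sum_(j < M) (if (v == j :> nat)%N then X j else 0) = if (v < M)%N then X v else 0.
Proof.
case: ifP => hv.
  rewrite (bigD1 (Ordinal hv)) //= big1 ?addr0.
    by case: ifP => // /negbT; rewrite eqxx.
  move=> j hj.
  case: ifP => // /eqP e; move: hj; rewrite -(inj_eq val_inj) /= e eqxx //.
apply: big1 => j _; case: ifP => // /eqP e; move: hv; rewrite e ltn_ord //.
Qed.

Lemma ev_sum K M (c : nat -> F) (f : nat -> nat -> nat -> F) t u :
  \sum_(j < M) c j * ev K (f j) t u = ev K (fun r k => \sum_(j < M) c j * f j r k) t u.
Proof.
rewrite /ev; under eq_bigr do rewrite mulr_sumr; rewrite exchange_big; apply: eq_bigr => r _.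
under eq_bigr do rewrite mulr_sumr; rewrite exchange_big; apply: eq_bigr => k _.
rewrite !mulr_suml; apply: eq_bigr => j _; ring.
Qed.

Lemma ev_row0 K (g : nat -> F) t u : (0 < K)%N ->
  ev K (fun r k => if r is 0%N then g k else 0) t u = \sum_(k < K) g k * t ^+ k.
Proof.
case: K => // K _; rewrite /ev big_ord_recl /= [X in _ + X]big1 ?addr0.
  by apply: eq_bigr => k _; rewrite mulr1.
by move=> r _; apply: big1 => k _; rewrite !mul0r.
Qed.

Variable n : nat.
Let K := n.+2.

Definition h1 (r k : nat) : F := if r is 0%N then 0 else ('C(n, r) * 'C(n - r, k))%:R.
Definition h2 (r k : nat) : F :=
  if r is r'.+1 then (-1) ^+ r' * ('C(n, k + r.*2) * wp (k + r') r')%:R else 0.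

Lemma P1 (t u : F) : (1 + t + u) ^+ n - (1 + t) ^+ n = ev K h1 t u.
Proof.
have full : (1 + t + u) ^+ n = ev K (fun r k => ('C(n, r) * 'C(n - r, k))%:R) t u.
  rewrite exprDn (@sum_widen (fun i => (1 + t) ^+ (n - i) * u ^+ i *+ 'C(n, i)) n.+1 K) //; last first.
    by move=> i hi; rewrite bin_small // mulr0n.
  apply: eq_bigr => r _; rewrite (@binK t (n - r) K); last by rewrite /K; lia.
  rewrite -mulr_natr mulr_suml mulr_suml; apply: eq_bigr => k _.
  rewrite natrM; ring.
have row : (1 + t) ^+ n = ev K (fun r k => if r is 0%N then ('C(n, 0) * 'C(n - 0, k))%:R else 0) t u.
  by rewrite ev_row0 // (binK t (M := K)) //; apply: eq_bigr => k _; rewrite bin0 mul1n subn0.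
rewrite full row -ev_opp -(mul1r (ev K _ t u)) -ev_lin.
by apply: ev_ext => [[|r]] k; rewrite /h1 ?mul1r ?subrr // subr0.
Qed.


Lemma P2 (A B : F) : 1 + (1 + (A + B)) ^+ n - (1 + A) ^+ n - (1 + B) ^+ n = ev K h2 (A + B) (A * B).
Proof.
have e : (1 + (A + B)) ^+ n - (1 + A) ^+ n - (1 + B) ^+ n = \sum_(j < n.+1) 'C(n, j)%:R * DD F A B j.
  rewrite !(binK _ (M := n.+1)) // -!sumrB; apply: eq_bigr => j _; rewrite /DD; ring.
have e2 : \sum_(j < n.+1) 'C(n, j)%:R * DD F A B j = \sum_(j < n.+1) 'C(n, j)%:R * ev K (luc F j) (A + B) (A * B).
  by apply: eq_bigr => j _; rewrite (@luc_ev F A B K) // /K ltnS.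
rewrite (_ : 1 + (1 + (A + B)) ^+ n - (1 + A) ^+ n - (1 + B) ^+ n =
   1 + ((1 + (A + B)) ^+ n - (1 + A) ^+ n - (1 + B) ^+ n)); last by ring.
rewrite e e2 (@ev_sum K n.+1 (fun j => 'C(n, j)%:R) (fun j => luc F j)).
rewrite (@ev_ext _ K _ (fun r k => 1 * h2 r k + - ((r == 0%N) && (k == 0%N))%:R)); last first.
  move=> [|r] k.
    rewrite /h2 mulr0 add0r /luc big_ord_recl /= big1.
      by case: k => [|k] /=; rewrite bin0 ?mul1r ?mulr0 addr0 ?oppr0.
    by move=> j _; rewrite mulr0.
  rewrite /luc /= subr0 mul1r.
  rewrite (eq_bigr (fun j : 'I_n.+1 => if (k + r.+1.*2 == j :> nat)%N then
      'C(n, k + r.+1.*2)%:R * ((-1) ^+ r * (wp (k + r) r)%:R) else 0)); last first.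
    by move=> j _; case: ifP => [/eqP ->|]; rewrite ?mulr0.
  rewrite (@sum_ind n.+1 (k + r.+1.*2) (fun _ => 'C(n, k + r.+1.*2)%:R * ((-1) ^+ r * (wp (k + r) r)%:R))) /h2 natrM.
  case: ifP => [_|/negbT]; first by ring.
  by rewrite -leqNgt => h; rewrite bin_small ?mul0r ?mulr0.
rewrite ev_lin mul1r ev_opp ev_delta // expr0 mulr1; ring.
Qed.

Lemma Pall (A B : F) :
  ev K (fun r k => h1 r k + h2 r k) (A + B) (A * B) = ((1 + A) ^+ n - 1) * ((1 + B) ^+ n - 1).
Proof.
rewrite (@ev_ext _ K _ (fun r k => 1 * h1 r k + h2 r k)); last by move=> r k; rewrite mul1r.
rewrite ev_lin mul1r -P1 -P2.
have -> : 1 + (A + B) + A * B = (1 + A) * (1 + B) by ring.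
rewrite exprMn; ring.
Qed.
End Parts.

Lemma binA n a k : ('C(n, a) * 'C(n - a, k) = 'C(n, a + k) * 'C(a + k, a))%N.
Proof.
case: (leqP (a + k) n) => h; last first.
  rewrite (bin_small h) mul0n.
  case: (leqP a n) => ha; last by rewrite bin_small.
  by rewrite (@bin_small (n - a) k) ?muln0 //; lia.
have P : (0 < a`! * k`! * (n - a - k)`!)%N by rewrite !muln_gt0 !fact_gt0.
apply/eqP; rewrite -(eqn_pmul2r P); apply/eqP.
have e1 := bin_fact (leq_trans (leq_addr k a) h).
have e2 : ('C(n - a, k) * (k`! * (n - a - k)`!) = (n - a)`!)%N.
  by apply: bin_fact; lia.
have e3 := bin_fact h.
have e4 := bin_fact (leq_addr k a).
rewrite (_ : (a + k - a = k)%N) in e4; last by lia.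
rewrite (_ : (n - (a + k) = n - a - k)%N) in e3; last by lia.
rewrite (_ : ('C(n, a) * 'C(n - a, k) * (a`! * k`! * (n - a - k)`!) =
   ('C(n, a) * (a`! * (n - a)`!)))%N); last first.
  by rewrite -e2; ring.
rewrite e1 -e3 -e4; ring.
Qed.

Lemma N1 n r k : ((r.+1) * ('C(n, r.+1) * 'C(n - r.+1, k)) = n * ('C(r + k, r) * 'C(n.-1, r + k)))%N.
Proof.
rewrite binA (_ : (r.+1 + k = (r + k).+1)%N); last by lia.
have e1 := mul_bin_diag (r + k).+1 r. have e2 := mul_bin_diag n (r + k).
rewrite /= in e1.
transitivity ('C(n, (r + k).+1) * (r.+1 * 'C((r + k).+1, r.+1)))%N; first by ring.
rewrite -e1.
transitivity ('C(r + k, r) * ((r + k).+1 * 'C(n, (r + k).+1)))%N; first by ring.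
rewrite -e2; ring.
Qed.

Lemma N2 n r k : ((r.+1) * ('C(n, k + r.+1.*2) * wp (k + r) r) = n * ('C(r + k, r) * 'C(n.-1, r + k + r + 1)))%N.
Proof.
have e1 := mul_bin_diag (k + r).+1 r. rewrite /= in e1.
have e2 := mul_bin_diag n (r + k + r + 1).
rewrite (_ : ((r + k + r + 1).+1 = k + r.+1.*2)%N) in e2; last by lia.
rewrite /wp.
transitivity ('C(n, k + r.+1.*2) * (r.+1 * 'C((k + r).+1, r.+1) + r.+1 * 'C(k + r, r)))%N; first by ring.
rewrite -e1.
transitivity ('C(k + r, r) * ((k + r.+1.*2) * 'C(n, k + r.+1.*2)))%N.
  rewrite -mul2n; ring.
rewrite -e2 (addnC r k); ring.
Qed.

Lemma coefT (F : numFieldType) (n r k : nat) : (0 < n)%N ->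
  h1 F n r.+1 k + h2 F n r.+1 k = (n%:R : F) ^+ 2 * (((r.+1 * n)%:R)^-1 * ('C(r + k, r))%:R *
     (('C(n.-1, r + k))%:R + (-1) ^+ r * ('C(n.-1, r + k + r + 1))%:R)).
Proof.
move=> n0.
have nz : (r.+1%:R : F) != 0 by rewrite pnatr_eq0.
have nn : (n%:R : F) != 0 by rewrite pnatr_eq0 -lt0n.
apply: (mulfI nz).
have L : r.+1%:R * (h1 F n r.+1 k + h2 F n r.+1 k) =
   (n * ('C(r + k, r) * 'C(n.-1, r + k)))%:R + (-1) ^+ r * (n * ('C(r + k, r) * 'C(n.-1, r + k + r + 1)))%:R :> F.
  by rewrite /h1 /h2 -N1 -N2 !natrM; ring.
rewrite L natrM; field.
by rewrite nn /= addrC natr1.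
Qed.

Fixpoint LL (len r : nat) : seq (seq nat) :=
  match len with
  | 0 => if r == 0%N then [:: [::]] else [::]
  | len'.+1 => (if r is r'.+1 then map (cons 2%N) (LL len' r') else [::]) ++ map (cons 1%N) (LL len' r)
  end.

Definition all12 (t : seq nat) := all (fun x => (x == 1%N) || (x == 2%N)) t.

Lemma mem_cons_map (a x : nat) t' (A : seq (seq nat)) :
  (x :: t' \in map (cons a) A) = (x == a) && (t' \in A).
Proof.
apply/mapP/andP => [[s sA [-> ->]]|[/eqP -> tA]]; first by rewrite eqxx.
by exists t'.
Qed.

Lemma mem_cons_map' (a x : nat) t' (A : seq (seq nat)) :
  (x :: t' \in map (fun s => a :: s) A) = (x == a) && (t' \in A).
Proof. exact: mem_cons_map. Qed.

Lemma nil_map (a : nat) (A : seq (seq nat)) : ([::] \in map (cons a) A) = false.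
Proof. by apply/negbTE/mapP => [[s _]]. Qed.

Lemma mem_LL len r t :
  (t \in LL len r) = [&& size t == len, all12 t & count_mem 2%N t == r].
Proof.
elim: len r t => [|len IH] r t /=.
  case: t => [|x t] /=; first by case: r.
  by case: r.
rewrite mem_cat; case: t => [|x t].
  by case: r => [|r] /=; rewrite ?nil_map.
rewrite /= eqSS.
have -> : (x :: t \in map (cons 1%N) (LL len r)) = (x == 1%N) && (t \in LL len r).
  exact: mem_cons_map.
have [->|ne1] := eqVneq x 1%N.
  case: r => [|r] /=; rewrite ?IH ?add0n //.
  by rewrite mem_cons_map.
have [->|ne2] := eqVneq x 2%N.
  case: r => [|r] /=; first by rewrite add1n !andbF.
  by rewrite mem_cons_map' eqxx IH add1n eqSS orbF.
rewrite ?(negbTE ne1) ?(negbTE ne2) /= ?andbF.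
case: r => [|r] //=; rewrite orbF mem_cons_map (negbTE ne2) //.
Qed.

Lemma uniq_LL len r : uniq (LL len r).
Proof.
elim: len r => [|len IH] r /=; first by case: r.
have inj : forall a : nat, injective (cons a) by move=> a x y [].
case: r => [|r]; first by rewrite cat0s map_inj_uniq.
rewrite cat_uniq !map_inj_uniq // !IH /= andbT.
apply/hasPn => t /mapP [s _ ->]; apply/negP => /mapP [s' _ []] //.
Qed.

Lemma LL_perm len r t : (r <= len)%N ->
  (t \in LL len r) = perm_eq t (nseq r 2%N ++ nseq (len - r) 1%N).
Proof.
move=> rl; apply/idP/idP.
  elim: len r rl t => [|len IH] r rl t /=.
    by case: r rl => // _; rewrite inE => /eqP ->.
  rewrite mem_cat => /orP [|].
    case: r rl => // r rl /mapP [s sL ->] /=.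
    by rewrite perm_cons subSS IH.
  move=> /mapP [s sL ->].
  have rl' : (r <= len)%N.
    by move: sL; rewrite mem_LL => /and3P [/eqP <- _ /eqP <-]; rewrite -[X in (_ <= X)%N](count_predC (pred1 2%N)) leq_addr.
  rewrite subSn //= perm_sym -(perm_catCA [:: 1%N]) /= perm_cons perm_sym IH //.
move=> h; rewrite mem_LL (perm_size h) /all12 (perm_all _ h) all_cat !all_nseq /= !orbT.
rewrite size_cat !size_nseq subnKC // eqxx /=.
have := (permP h) (pred1 2%N); rewrite /= => ->.
by rewrite count_cat !count_nseq /= mul1n mul0n addn0.
Qed.


Section Y.
Variable R : realType.
Variable n : nat.
Local Notation C := (R[i]).
Local Notation x := (xx R n).

Definition YY lo len r : C := \sum_(t <- LL len r) Zaux R n lo t.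
Local Notation Y := YY.

Lemma Zaux_supp lo t : (n - lo < size t)%N -> Zaux R n lo t = 0.
Proof.
elim: t lo => [|a t IH] lo //= h.
rewrite big_nat big1 // => i /andP [hi1 hi2].
by rewrite IH ?mulr0 //; lia.
Qed.

Lemma LL_size len r t : t \in LL len r -> size t = len.
Proof. by rewrite mem_LL => /and3P [/eqP]. Qed.

Lemma Y_supp lo len r : (n - lo < len)%N -> Y lo len r = 0.
Proof.
move=> h; rewrite /YY big_seq big1 // => t /LL_size e.
by apply: Zaux_supp; rewrite e.
Qed.

Lemma LL_nil len r : (len < r)%N -> LL len r = [::].
Proof.
elim: len r => [|len IH] [|r] //= h.
by rewrite !IH //; lia.
Qed.

Lemma Y0 lo r : Y lo 0 r = (r == 0%N)%:R.
Proof. by case: r => [|r]; rewrite /YY /= ?big_nil // big_cons big_nil addr0. Qed.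

Lemma Y_rec lo len r : Y lo len.+1 r =
  (if r is r'.+1 then \sum_(lo <= i < n) x i ^+ 2 * Y i.+1 len r' else 0)
  + \sum_(lo <= i < n) x i * Y i.+1 len r.
Proof.
rewrite /YY /= big_cat /=; congr (_ + _).
  case: r => [|r]; first by rewrite big_nil.
  rewrite big_map /= exchange_big /=; apply: eq_bigr => i _.
  by rewrite mulr_sumr; apply: eq_bigr => t _; rewrite /xx exprVn.
rewrite big_map /= exchange_big /=; apply: eq_bigr => i _.
by rewrite mulr_sumr; apply: eq_bigr => t _; rewrite /xx expr1.
Qed.

End Y.

Section Y2.
Variable R : realType.
Variable n : nat.
Local Notation C := (R[i]).
Local Notation x := (xx R n).
Local Notation Y := (YY R n).

Lemma Y_step lo len r : (lo < n)%N -> Y lo len.+1 r =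
  Y lo.+1 len.+1 r + (if r is r'.+1 then x lo ^+ 2 * Y lo.+1 len r' else 0) + x lo * Y lo.+1 len r.
Proof.
move=> h; rewrite Y_rec [Y lo.+1 len.+1 r]Y_rec !(big_ltn h).
by case: r => [|r] /=; rewrite ?(big_ltn h); ring.
Qed.

Lemma Y_nil lo len r : (len < r)%N -> Y lo len r = 0.
Proof. by move=> h; rewrite /YY LL_nil // big_nil. Qed.

Lemma ev_scale K (a : C) f t u : ev K (fun r k => a * f r k) t u = a * ev K f t u.
Proof.
have := ev_lin K a f (fun _ _ => 0) t u; rewrite ev0 addr0 => <-.
by apply: ev_ext => r k; rewrite addr0.
Qed.

Definition Yb lo r k := Y lo (r + k) r.

Lemma Yb_step lo r k : (lo < n)%N -> Yb lo r k =
  Yb lo.+1 r k + (if r is r'.+1 then x lo ^+ 2 * Yb lo.+1 r' k else 0)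
  + (if k is k'.+1 then x lo * Yb lo.+1 r k' else 0).
Proof.
move=> h; rewrite /Yb.
case: r => [|r]; case: k => [|k].
- by rewrite /= !Y0 !addr0.
- by rewrite add0n Y_step // addr0.
- by rewrite addn0 Y_step // addn0 (Y_nil _ (ltnSn r)) mulr0 addr0.
- have e : (r.+1 + k.+1 = (r.+1 + k).+1)%N by lia.
  have e2 : (r + k.+1 = r.+1 + k)%N by lia.
  by rewrite e Y_step // e2.
Qed.

Lemma Yb_n r k : Yb n r k = ((r == 0%N) && (k == 0%N))%:R.
Proof.
rewrite /Yb; case: r => [|r]; case: k => [|k].
- by rewrite Y0.
- by rewrite add0n Y_rec big_geq // add0r.
- by rewrite addn0 Y_rec big_geq // big_geq // add0r.
- by rewrite addSn Y_rec big_geq // big_geq // add0r.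
Qed.

Lemma GF lo t u : (lo <= n)%N ->
  ev n.+2 (Yb lo) t u = \prod_(lo <= i < n) (1 + t * x i + u * x i ^+ 2).
Proof.
move=> h; have [d [-> hd0]] : exists d, lo = (n - d)%N /\ (d <= n)%N by exists (n - lo)%N; split; lia.
move: hd0; clear h; elim: d => [|d IH] hd.
  rewrite subn0 big_geq // (@ev_ext _ _ _ (fun r k => ((r == 0%N) && (k == 0%N))%:R)).
    by rewrite ev_delta // expr0 mulr1.
  exact: Yb_n.
have hl : (n - d.+1 < n)%N by lia.
have e : (n - d.+1).+1 = (n - d)%N by lia.
rewrite big_ltn // e -IH; last by lia.
set a := x (n - d.+1).
rewrite (@ev_ext _ _ _ (fun r k => 1 * Yb (n - d) r k +
   (a ^+ 2 * (if r is r'.+1 then Yb (n - d) r' k else 0) +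
    a * (if k is k'.+1 then Yb (n - d) r k' else 0)))); last first.
  move=> r k; rewrite Yb_step // e mul1r addrA.
  by congr (_ + _ + _); [case: r => [|r]; rewrite ?mulr0 | case: k => [|k]; rewrite ?mulr0].
rewrite ev_lin mul1r ev_lin.
rewrite ev_scale ev_shiftr //; last first.
  by move=> k; rewrite /Yb Y_supp //; lia.
rewrite ev_shiftk //; last by move=> r; rewrite /Yb Y_supp //; lia.
ring.
Qed.
End Y2.

Section Final.
Variable R : realType.
Variable n : nat.
Hypothesis n0 : (0 < n)%N.
Local Notation C := (R[i]).

Lemma prodAB (A B : C) : A * B * (n%:R ^+ 2) *
   \prod_(1 <= i < n) (1 + (A + B) * xx R n i + A * B * xx R n i ^+ 2) =
   ((1 + A) ^+ n - 1) * ((1 + B) ^+ n - 1).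
Proof.
rewrite (eq_bigr (fun i => (1 + A * xx R n i) * (1 + B * xx R n i))); last by move=> i _; ring.
rewrite big_split /=.
have eA := @prodA R n n0 A. have eB := @prodA R n n0 B.
have sA : (1 + A) ^+ n - 1 = A * SS R n (1 + A) by rewrite subrX1 /SS addrC addKr.
have sB : (1 + B) ^+ n - 1 = B * SS R n (1 + B) by rewrite subrX1 /SS addrC addKr.
rewrite sA sB -eA -eB; ring.
Qed.

Lemma key r k : (r.+1 < n.+2)%N -> (k < n.+2)%N ->
  (n%:R ^+ 2) * Yb R n 1 r k = h1 C n r.+1 k + h2 C n r.+1 k.
Proof.
move=> hr hk.
pose f := fun r k => (if r is r'.+1 then (n%:R ^+ 2) * Yb R n 1 r' k else 0) + - (h1 C n r k + h2 C n r k).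
have H : forall t u, ev n.+2 f t u = 0.
  move=> t u.
  pose s := sqrtc (t ^+ 2 - 4%:R * u).
  pose A := (t + s) / 2%:R. pose B := (t - s) / 2%:R.
  have two : (2%:R : C) != 0 by rewrite pnatr_eq0.
  have et : t = A + B by rewrite /A /B; field.
  have eu : u = A * B.
    rewrite /A /B; have ss := sqr_sqrtc (t ^+ 2 - 4%:R * u); rewrite -/s in ss.
    apply/eqP; rewrite -subr_eq0; apply/eqP.
    have -> : u - (t + s) / 2%:R * ((t - s) / 2%:R) = (s ^+ 2 - (t ^+ 2 - 4%:R * u)) / 4%:R.
      by field.
    by rewrite ss subrr mul0r.
  rewrite (@ev_ext _ _ f (fun r k => 1 * (if r is r'.+1 then (n%:R ^+ 2) * Yb R n 1 r' k else 0)
     + - (h1 C n r k + h2 C n r k))); last by move=> r0 k0; rewrite mul1r.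
  rewrite ev_lin mul1r ev_opp.
  rewrite et eu ev_shiftr //; last first.
    by move=> k0; rewrite /Yb Y_supp ?mulr0 //; lia.
  by rewrite ev_scale GF // Pall mulrA prodAB subrr.
have := ev_unique H hr hk; rewrite /f => /eqP; rewrite subr_eq0 => /eqP //.
Qed.
End Final.

Theorem theorem6 (R : realType) (n m r : nat) :
  (1 <= n)%N -> (r <= m)%N ->
  calY R n (nseq r 2%N ++ nseq (m - r) 1%N) =
    (((r.+1 * n)%:R)^-1 * ('C(m, r))%:R *
     (('C(n.-1, m))%:R + (-1) ^+ r * ('C(n.-1, m + r + 1))%:R) : R[i]).
Proof.
move=> n0 rm.
have e1 : calY R n (nseq r 2%N ++ nseq (m - r) 1%N) = YY R n 1 m r.
  rewrite /calY /YY /frakZ; apply: perm_big; apply: uniq_perm.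
  - exact: undup_uniq.
  - exact: uniq_LL.
  - by move=> t; rewrite mem_undup mem_permutations (LL_perm _ rm).
rewrite e1.
case: (ltnP m n) => hm; last first.
  rewrite Y_supp; last by lia.
  have h1' : (n.-1 < m)%N by lia.
  have h2' : (n.-1 < m + r + 1)%N by lia.
  by rewrite (bin_small h1') (bin_small h2') mulr0 addr0 mulr0.
have := @key R n n0 r (m - r).
rewrite coefT // (subnKC rm) /Yb (subnKC rm) => h.
have nz : ((n%:R : R[i]) ^+ 2) != 0 by rewrite expf_eq0 pnatr_eq0 -lt0n n0.
apply: (mulfI nz); apply: h; lia.
Qed.
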